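(* Let $\mathbf{s}, \mathbf{n} \in \mathbb{R}^T$, let $\mathbf{y} = \mathbf{s} + \mathbf{n}$, and let $\widehat{\mathbf{s}} \in \mathbb{R}^T$ be any vector (the enhanced signal). Let $\omega_{\text{obs}} > 0$ and set $\overline{\mathbf{s}} = \widehat{\mathbf{s}} + \omega_{\text{obs}}\mathbf{y}$. Assume $\mathbf{P}_{\mathbf{s},\mathbf{n}}\widehat{\mathbf{s}} \neq \mathbf{0}$ and $\widehat{\mathbf{s}} - \mathbf{P}_{\mathbf{s},\mathbf{n}}\widehat{\mathbf{s}} \neq \mathbf{0}$. If $\langle \widehat{\mathbf{s}}, \mathbf{y} \rangle > 0$, then $\mathrm{SAR}(\overline{\mathbf{s}}) > \mathrm{SAR}(\widehat{\mathbf{s}})$.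
   Context: Fix an integer $L \ge 1$. For a vector $\mathbf{x} \in \mathbb{R}^T$ and $0 \le \tau \le L-1$, let $\mathbf{x}^{\tau}$ denote $\mathbf{x}$ delayed by $\tau$ samples, i.e. $(\mathbf{x}^{\tau})_t = x_{t-\tau}$ for $t > \tau$ and $0$ otherwise. Let $\mathbf{A}_{\mathbf{s},\mathbf{n}} = [\mathbf{s}^{0},\dots,\mathbf{s}^{L-1},\mathbf{n}^{0},\dots,\mathbf{n}^{L-1}] \in \mathbb{R}^{T\times 2L}$, assumed to have full column rank, and let $\mathbf{P}_{\mathbf{s},\mathbf{n}} = \mathbf{A}_{\mathbf{s},\mathbf{n}}(\mathbf{A}_{\mathbf{s},\mathbf{n}}^{\mathsf T}\mathbf{A}_{\mathbf{s},\mathbf{n}})^{-1}\mathbf{A}_{\mathbf{s},\mathbf{n}}^{\mathsf T}$ be the orthogonal projection onto the span of these delayed signals. For an estimate $\mathbf{z} \in \mathbb{R}^T$, define the artifact error $\mathbf{e}_{\text{artif}}(\mathbf{z}) = \mathbf{z} - \mathbf{P}_{\mathbf{s},\mathbf{n}}\mathbf{z}$ and the signal-to-artifact ratio $\mathrm{SAR}(\mathbf{z}) = 10\log_{10}\frac{\|\mathbf{P}_{\mathbf{s},\mathbf{n}}\mathbf{z}\|^2}{\|\mathbf{e}_{\text{artif}}(\mathbf{z})\|^2}$ (equivalently $\|\mathbf{s}_{\text{target}}+\mathbf{e}_{\text{noise}}\|^2/\|\mathbf{e}_{\text{artif}}\|^2$ in the decomposition $\mathbf{z} = \mathbf{P}_{\mathbf{s}}\mathbf{z}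 + (\mathbf{P}_{\mathbf{s},\mathbf{n}}-\mathbf{P}_{\mathbf{s}})\mathbf{z} + \mathbf{e}_{\text{artif}}(\mathbf{z})$). Here $\langle\cdot,\cdot\rangle$ is the Euclidean inner product. *)

(* Defs.v *)
From mathcomp Require Import all_boot all_order all_algebra.
From mathcomp Require Import reals exp.
Set Implicit Arguments. Unset Strict Implicit. Unset Printing Implicit Defensive.
Import Order.TTheory GRing.Theory Num.Theory.
Local Open Scope ring_scope.

Section Defs.
Variables (R : realType) (T L : nat).

(* delayed signal x^tau, 0-indexed: (x^tau)_t = x_(t - tau) if tau <= t, else 0.
   Written as the sum over the (at most one) index u with u + tau = t. *)
Definition delay (x : 'cV[R]_T) (tau : nat) : 'cV[R]_T :=
  \col_(t < T) \sum_(u < T | (u + tau == t)%N) x u 0.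

Definition delay_mx (x : 'cV[R]_T) : 'M[R]_(T, L) :=
  \matrix_(t < T, k < L) delay x k t 0.

Definition A_sn (s n : 'cV[R]_T) : 'M[R]_(T, L + L) :=
  row_mx (delay_mx s) (delay_mx n).

Definition P_sn (s n : 'cV[R]_T) : 'M[R]_T :=
  let A := A_sn s n in A *m invmx (A^T *m A) *m A^T.

Definition inner (x y : 'cV[R]_T) : R := (x^T *m y) 0 0.
Definition sqnorm (x : 'cV[R]_T) : R := inner x x.

Definition e_artif (s n z : 'cV[R]_T) : 'cV[R]_T := z - P_sn s n *m z.

Definition log10 (x : R) : R := ln x / ln 10.

Definition SAR (s n z : 'cV[R]_T) : R :=
  10 * log10 (sqnorm (P_sn s n *m z) / sqnorm (e_artif s n z)).
End Defs.

(* Main.v *)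
Require Import Defs.
From mathcomp Require Import all_boot all_order all_algebra.
From mathcomp Require Import reals exp ring lra.
Import Order.TTheory GRing.Theory Num.Theory.
Local Open Scope ring_scope.

Section Aux.
Variables (R : realType) (T L : nat).

Lemma sqnorm_ge0 (x : 'cV[R]_T) : 0 <= sqnorm x.
Proof.
rewrite /sqnorm /inner mxE; apply: sumr_ge0 => i _; rewrite mxE.
by rewrite -expr2 sqr_ge0.
Qed.

Lemma sqnorm_eq0 (x : 'cV[R]_T) : sqnorm x = 0 -> x = 0.
Proof.
rewrite /sqnorm /inner mxE => /eqP; rewrite psumr_eq0; last first.
  by move=> i _; rewrite mxE -expr2 sqr_ge0.
move=> /allP H; apply/matrixP => i j; rewrite (ord1 j) mxE.
have := H i (mem_index_enum _); rewrite mxE -expr2 sqrf_eq0 => /eqP //.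
Qed.

Lemma sqnorm_gt0 (x : 'cV[R]_T) : x != 0 -> 0 < sqnorm x.
Proof.
move=> nx; rewrite lt_def sqnorm_ge0 andbT; apply/eqP => /sqnorm_eq0.
by move/eqP: nx.
Qed.

Lemma delay0 (x : 'cV[R]_T) : delay x 0 = x.
Proof.
apply/matrixP => t j; rewrite (ord1 j) mxE.
rewrite (eq_bigl (pred1 t)); first by rewrite big_pred1_eq.
by move=> u /=; rewrite addn0.
Qed.

Lemma delay_mx_e (hL : (0 < L)%N) (x : 'cV[R]_T) :
  delay_mx L x *m delta_mx (Ordinal hL) 0 = x.
Proof.
rewrite -colE; apply/matrixP => t j; rewrite (ord1 j) !mxE /=.
by rewrite -[in RHS](delay0 x) mxE.
Qed.
End Aux.

Theorem proposition1 (R : realType) (T L : nat) (hL : (1 <= L)%N)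
  (s n shat : 'cV[R]_T) (w_obs : R)
  (hrank : \rank (A_sn L s n) = (L + L)%N)
  (hw : 0 < w_obs)
  (hP : P_sn L s n *m shat != 0)
  (hE : e_artif L s n shat != 0)
  (hpos : 0 < inner shat (s + n)) :
  SAR L s n (shat + w_obs *: (s + n)) > SAR L s n shat.
Proof.
set A := A_sn L s n.
set y := s + n in hpos *.
have hAy : A *m col_mx (delta_mx (Ordinal hL) 0) (delta_mx (Ordinal hL) 0) = y.
  by rewrite /A /A_sn mul_row_col !delay_mx_e.
have hU : A^T *m A \in unitmx.
  rewrite -row_free_unit; apply: inj_row_free => v hv.
  have : sqnorm (A *m v^T) = 0.
    rewrite /sqnorm /inner trmx_mul trmxK mulmxA -(mulmxA v) hv mul0mx mxE.
    by [].
  move/sqnorm_eq0 => h.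
  have hf : row_free A^T by rewrite /row_free mxrank_tr hrank.
  apply: (row_free_inj hf); rewrite mul0mx -[v]trmxK -trmx_mul h.
  by rewrite trmx0.
have hPA : P_sn L s n *m A = A.
  by rewrite /P_sn -/A -!mulmxA mulVmx // mulmx1.
have hPy : P_sn L s n *m y = y by rewrite -hAy mulmxA hPA.
clearbody y.
have hPT : (P_sn L s n)^T = P_sn L s n.
  by rewrite /P_sn -/A !trmx_mul trmxK trmx_inv trmx_mul trmxK mulmxA.
set P := P_sn L s n in hP hE hPy hPT *.
set p := P *m shat.
have hnum : P *m (shat + w_obs *: y) = p + w_obs *: y.
  by rewrite mulmxDr -scalemxAr hPy.
have hden : e_artif L s n (shat + w_obs *: y) = e_artif L s n shat.
  by rewrite /e_artif -/P hnum opprD addrACA subrr addr0.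
have hin : inner p y = inner shat y.
  by rewrite /p /inner trmx_mul hPT -mulmxA hPy.
have hsq : sqnorm (p + w_obs *: y) =
    sqnorm p + 2 * w_obs * inner p y + w_obs ^+ 2 * sqnorm y.
  have hsym : inner y p = inner p y.
    by rewrite /inner -[p^T *m y]trmxK trmx_mul trmxK [RHS]mxE.
  move: hsym; rewrite /sqnorm /inner !linearD /= => hsym.
  rewrite !mulmxDl ?mulmxDr linearZ /= -!scalemxAl -!scalemxAr.
  set a := p^T *m p; set b := p^T *m y; set c := y^T *m p; set d := y^T *m y.
  rewrite !mxE; move: hsym; rewrite !mxE => ->; ring.
have hp0 : 0 < sqnorm p by apply: sqnorm_gt0.
have he0 : 0 < sqnorm (e_artif L s n shat) by apply: sqnorm_gt0.
have hy0 := @sqnorm_ge0 R T y.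
have hlt : sqnorm p < sqnorm (p + w_obs *: y).
  rewrite hsq hin.
  have : 0 < w_obs * inner shat y by apply: mulr_gt0.
  have : 0 <= w_obs ^+ 2 * sqnorm y by apply: mulr_ge0; rewrite ?sqr_ge0.
  lra.
rewrite /SAR -/P hnum hden -/p.
rewrite ltr_pM2l // /log10 ltr_pM2r ?invr_gt0 ?ln_gt0 ?(ltr_nat R 1 10) //.
rewrite ltr_ln ?posrE ?divr_gt0 //; last by lra.
by rewrite ltr_pM2r ?invr_gt0.
Qed.
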